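(* Every pair of different words $x,y$ over a finite alphabet can be separated exactly by a 2-state AfA.
   Context: An $n$-state affine finite automaton (AfA) over a finite alphabet $\Sigma$ consists of real $n\times n$ matrices $A_\sigma$ for $\sigma\in\Sigma\cup\{\$\}$ ($\$$ a right end-marker), each of whose columns sums to $1$; an initial vector $v_0\in\mathbb{R}^n$ with entries summing to $1$; and a set $E_a$ of accepting states. On input $w=w_1\cdots w_k$ the final vector is $v_f=A_\$A_{w_k}\cdots A_{w_1}v_0$, and $w$ is accepted with probability $\sum_{j\in E_a}|v_f[j]|\big/\sum_{j=1}^n|v_f[j]|$. A pair is separated exactly if one word is accepted with probability $1$ and the other with probability $0$. *)

(* Defs.v *)
From Stdlib Require Import Reals List.
Import ListNotations.
Open Scope R_scope.

Definition fsum (n : nat) (f : nat -> R) : R :=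
  fold_right Rplus 0 (map f (seq 0 n)).

(* States are indices 0..n-1; vectors are functions nat -> R (only entries
   below n matter); matrices are functions nat -> nat -> R (row, column).
   The end-marker matrix is [afa_end]. *)
Record AfA (Sigma : Type) (n : nat) := mkAfA {
  afa_trans : Sigma -> nat -> nat -> R;
  afa_end : nat -> nat -> R;
  afa_init : nat -> R;
  afa_acc : nat -> bool
}.
Arguments afa_trans {Sigma n}.
Arguments afa_end {Sigma n}.
Arguments afa_init {Sigma n}.
Arguments afa_acc {Sigma n}.

Definition col_sums_one (n : nat) (A : nat -> nat -> R) : Prop :=
  forall j, (j < n)%nat -> fsum n (fun i => A i j) = 1.

Definition AfA_wf {Sigma : Type} {n : nat} (M : AfA Sigma n) : Prop :=
  (forall a, col_sums_one n (afa_trans M a)) /\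
  col_sums_one n (afa_end M) /\
  fsum n (afa_init M) = 1.

Definition mat_vec (n : nat) (A : nat -> nat -> R) (v : nat -> R) : nat -> R :=
  fun i => fsum n (fun j => A i j * v j).

Definition final_vec {Sigma : Type} {n : nat} (M : AfA Sigma n) (w : list Sigma)
  : nat -> R :=
  mat_vec n (afa_end M)
    (fold_left (fun v a => mat_vec n (afa_trans M a) v) w (afa_init M)).

Definition acc_prob {Sigma : Type} {n : nat} (M : AfA Sigma n) (w : list Sigma) : R :=
  let vf := final_vec M w in
  fsum n (fun j => if afa_acc M j then Rabs (vf j) else 0) /
  fsum n (fun j => Rabs (vf j)).

Definition separates_exactly {Sigma : Type} {n : nat} (M : AfA Sigma n)
  (x y : list Sigma) : Prop :=
  (acc_prob M x = 1 /\ acc_prob M y = 0) \/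
  (acc_prob M x = 0 /\ acc_prob M y = 1).

(* Main.v *)
Require Import Defs.
From Stdlib Require Import Reals List.
From Stdlib Require Import Lra Lia Classical ClassicalEpsilon FunctionalExtensionality.
Import ListNotations.
Open Scope R_scope.

Definition cb {Sigma : Type} (s : Sigma) (x : Sigma) : bool :=
  if excluded_middle_informative (x = s) then true else false.

Lemma exists_sep {Sigma : Type} (x y : list Sigma) :
  x <> y -> exists s, map (cb s) x <> map (cb s) y.
Proof.
  revert y; induction x as [|a x IH]; intros [|b y] H.
  - congruence.
  - exists b; simpl; discriminate.
  - exists a; simpl; discriminate.
  - destruct (classic (a = b)) as [<-|Hab].
    + assert (x <> y) by congruence.
      destruct (IH y H0) as [s Hs]. exists s. simpl. intro E. injection E; auto.
    + exists a. simpl. unfold cb at 1 3.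
      destruct (excluded_middle_informative (a = a)); [|congruence].
      destruct (excluded_middle_informative (b = a)); [congruence|].
      discriminate.
Qed.

Definition G (l : list bool) : nat :=
  fold_right (fun b m => 2 * m + Nat.b2n b)%nat 1%nat l.

Lemma G_pos l : (1 <= G l)%nat.
Proof. induction l; simpl; lia. Qed.

Lemma G_inj l1 l2 : G l1 = G l2 -> l1 = l2.
Proof.
  revert l2; induction l1 as [|a l1 IH]; intros [|b l2] H; simpl in H.
  - reflexivity.
  - pose proof (G_pos l2). destruct b; simpl in H; lia.
  - pose proof (G_pos l1). destruct a; simpl in H; lia.
  - assert (a = b /\ G l1 = G l2) as [-> E].
    { destruct a, b; simpl in H; split; try lia; reflexivity. }
    f_equal; auto.
Qed.

Definition code (l : list bool) : nat :=
  fold_left (fun m b => 2 * m + Nat.b2n b)%nat l 1%nat.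

Lemma code_G l : code l = G (rev l).
Proof. unfold code, G. rewrite fold_left_rev_right. reflexivity. Qed.

Lemma code_inj l1 l2 : code l1 = code l2 -> l1 = l2.
Proof.
  rewrite !code_G. intro H. apply G_inj in H.
  rewrite <- (rev_involutive l1), <- (rev_involutive l2), H. reflexivity.
Qed.

Definition bR (b : bool) : R := if b then 1 else 0.

Lemma real_code {Sigma : Type} (f : Sigma -> bool) (w : list Sigma) (n : nat) :
  fold_left (fun r a => 2 * r + bR (f a)) w (INR n) =
  INR (fold_left (fun m b => 2 * m + Nat.b2n b)%nat (map f w) n).
Proof.
  revert n; induction w as [|a w IH]; intros n; simpl; auto.
  rewrite <- IH. f_equal. rewrite plus_INR. replace (n + (n + 0))%nat with (2*n)%nat by lia. rewrite mult_INR. simpl (INR 2).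
  destruct (f a); simpl; lra.
Qed.

Definition aff (al be : R) (i j : nat) : R :=
  match i, j with
  | O, O => al + be
  | O, _ => be
  | _, O => 1 - al - be
  | _, _ => 1 - be
  end.

Definition vecof (a : R) (i : nat) : R := match i with O => a | _ => 1 - a end.

Lemma aff_cols al be : col_sums_one 2 (aff al be).
Proof.
  intros j Hj. unfold fsum; simpl.
  destruct j as [|[|j]]; simpl; try lia; lra.
Qed.

Lemma aff_vec al be a : mat_vec 2 (aff al be) (vecof a) = vecof (al * a + be).
Proof.
  apply functional_extensionality; intros i.
  unfold mat_vec, fsum; simpl.
  destruct i as [|i]; simpl; [lra|]. destruct i; lra.
Qed.

Lemma fold_vec {Sigma : Type} (al : Sigma -> R) (be : Sigma -> R) w a0 :
  fold_left (fun v a => mat_vec 2 (aff (al a) (be a)) v) w (vecof a0) =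
  vecof (fold_left (fun r a => al a * r + be a) w a0).
Proof.
  revert a0; induction w as [|a w IH]; intros a0; simpl; auto.
  rewrite aff_vec. apply IH.
Qed.

Theorem mainTheorem9 (Sigma : Type) (alphabet : list Sigma)
  (Hfin : forall a : Sigma, In a alphabet) (x y : list Sigma) :
  x <> y ->
  exists M : AfA Sigma 2, AfA_wf M /\ separates_exactly M x y.
Proof.
  intros Hxy.
  destruct (exists_sep x y Hxy) as [s Hs].
  set (val := fun w : list Sigma => fold_left (fun r a => 2 * r + bR (cb s a)) w 1).
  assert (Hval : forall w, val w = INR (code (map (cb s) w))).
  { intro w. unfold val, code. change 1 with (INR 1). apply real_code. }
  assert (Hne : val x <> val y).
  { rewrite !Hval. intro E. apply INR_eq in E. apply code_inj in E. auto. }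
  set (d := val x - val y).
  assert (Hd : d <> 0) by (unfold d; lra).
  exists (mkAfA Sigma 2 (fun a => aff 2 (bR (cb s a)))
            (aff (/ d) (- val y / d)) (vecof 1) (fun j => Nat.eqb j 0)).
  split.
  - split; [intros; apply aff_cols|split; [apply aff_cols|]].
    unfold fsum; simpl; lra.
  - assert (Hfin_vec : forall w, final_vec (mkAfA Sigma 2 (fun a => aff 2 (bR (cb s a)))
            (aff (/ d) (- val y / d)) (vecof 1) (fun j => Nat.eqb j 0)) w
            = vecof (/ d * val w + - val y / d)).
    { intro w. unfold final_vec; simpl.
      rewrite (fold_vec (fun _ => 2) (fun a => bR (cb s a))), aff_vec. reflexivity. }
    left. unfold acc_prob. rewrite !Hfin_vec. unfold fsum; simpl.
    replace (/ d * val x + - val y / d) with 1 by (unfold d in *; field; auto).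
    replace (/ d * val y + - val y / d) with 0 by (field; auto).
    rewrite Rminus_diag, Rminus_0_r, Rabs_R1, Rabs_R0. split; field_simplify; lra.
Qed.
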